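(* Let $(A,\circ)$ be a Novikov algebra, let $f:A\to A$ be a linear map, and define a new multiplication $a\bullet b=a\circ f(b)$. Then for all $a,b,c,d\in A$, $$((a\bullet b)\bullet c)\bullet d+((a\bullet c)\bullet d)\bullet b+((a\bullet d)\bullet b)\bullet c-((a\bullet c)\bullet b)\bullet d-((a\bullet d)\bullet c)\bullet b-((a\bullet b)\bullet d)\bullet c=0.$$
   Context: A (right) Novikov algebra is an algebra $(A,\circ)$ satisfying $a\circ(b\circ c)-(a\circ b)\circ c=a\circ(c\circ b)-(a\circ c)\circ b$ and $a\circ(b\circ c)=b\circ(a\circ c)$ for all $a,b,c$. *)

(* Defs.v *)
From HB Require Import structures.
From mathcomp Require Import all_boot all_order all_algebra.
Set Implicit Arguments. Unset Strict Implicit. Unset Printing Implicit Defensive.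
Import GRing.Theory.
Local Open Scope ring_scope.

Definition bilinear_op (K : fieldType) (A : lmodType K) (mul : A -> A -> A) : Prop :=
  (forall a : A, linear (mul a)) /\ (forall b : A, linear (fun a => mul a b)).

Definition novikov_identities (K : fieldType) (A : lmodType K) (mul : A -> A -> A) : Prop :=
  (forall a b c : A,
     mul a (mul b c) - mul (mul a b) c = mul a (mul c b) - mul (mul a c) b) /\
  (forall a b c : A, mul a (mul b c) = mul b (mul a c)).

Definition novikov_algebra (K : fieldType) (A : lmodType K) (mul : A -> A -> A) : Prop :=
  bilinear_op mul /\ novikov_identities mul.

(* Main.v *)
Require Import Defs.
From HB Require Import structures.
From mathcomp Require Import all_boot all_order all_algebra.
Import GRing.Theory.
Local Open Scope ring_scope.

Lemma circB (K : fieldType) (A : lmodType K) (circ : A -> A -> A) :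
  (forall a : A, linear (circ a)) -> forall u v w, circ u (v - w) = circ u v - circ u w.
Proof. move=> Hl u v w. by rewrite addrC -scaleN1r Hl scaleN1r addrC. Qed.
Arguments circB {K A circ}.
Inductive lexpr := LAtom of nat | LAdd of lexpr & lexpr | LOpp of lexpr | LZero.

Fixpoint interp (V : zmodType) (env : seq V) (e : lexpr) : V :=
  match e with
  | LAtom n => nth 0 env n
  | LAdd e1 e2 => interp V env e1 + interp V env e2
  | LOpp e1 => - interp V env e1
  | LZero => 0
  end.

Arguments interp {V}.
Fixpoint coef (e : lexpr) (n : nat) : int :=
  match e with
  | LAtom m => ((m == n) : nat)%:Z
  | LAdd e1 e2 => coef e1 n + coef e2 n
  | LOpp e1 => - coef e1 n
  | LZero => 0
  end.

Lemma interpE (V : zmodType) (env : seq V) e :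
  interp env e = \sum_(i <- iota 0 (size env)) (nth 0 env i) *~ coef e i.
Proof.
elim: e => [m|e1 IH1 e2 IH2|e1 IH1|] /=.
- case: (ltnP m (size env)) => hm.
  + rewrite (bigD1_seq m) ?mem_iota ?iota_uniq //= eqxx mulr1z big1 ?addr0 //.
    by move=> i /negPf; rewrite eq_sym => ->; rewrite mulr0z.
  + rewrite nth_default // big1_seq // => i /andP [_]; rewrite mem_iota => /andP [_ hi].
    have -> : (m == i) = false by apply/negbTE; rewrite neq_ltn; apply/orP; right; apply: leq_trans hi hm.
    by rewrite mulr0z.
- by rewrite IH1 IH2 -big_split /=; apply: eq_bigr => i _; rewrite mulrzDr.
- by rewrite IH1 -sumrN; apply: eq_bigr => i _; rewrite mulrNz.
- by rewrite big1 // => i _; rewrite mulr0z.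
Qed.

Lemma check (V : zmodType) (env : seq V) e :
  all (fun i => coef e i == 0) (iota 0 (size env)) -> interp env e = 0.
Proof.
move=> /allP H; rewrite interpE big1_seq // => i /andP [_ hi].
by rewrite (eqP (H i hi)) mulr0z.
Qed.

Theorem mainTheorem8 (K : fieldType) (A : lmodType K) (circ : A -> A -> A)
  (f : {linear A -> A}) :
  novikov_algebra circ ->
  let bul := fun a b : A => circ a (f b) in
  forall a b c d : A,
    bul (bul (bul a b) c) d + bul (bul (bul a c) d) b + bul (bul (bul a d) b) c
    - bul (bul (bul a c) b) d - bul (bul (bul a d) c) b - bul (bul (bul a b) d) c = 0.
Proof.
move=> [[Hl _] [RS LC]] bul a b c d; rewrite /bul.
move: (f b) (f c) (f d) => x y z.
have F0 : (((circ x (circ a (circ y z))) - (circ x (circ (circ a y) z))) - ((circ x (circ a (circ z y))) - (circ x (circ (circ a z) y)))) = 0.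
{ apply/eqP; rewrite subr_eq0 -!(circB Hl); apply/eqP; congr (circ x _); exact: RS a y z. }
have F1 : ((circ x (circ a (circ y z))) - (circ x (circ y (circ a z)))) = 0.
{ by rewrite (LC a y z) subrr. }
have F2 : ((circ x (circ a (circ z y))) - (circ x (circ z (circ a y)))) = 0.
{ by rewrite (LC a z y) subrr. }
have F3 : (((circ y (circ a (circ x z))) - (circ y (circ (circ a x) z))) - ((circ y (circ a (circ z x))) - (circ y (circ (circ a z) x)))) = 0.
{ apply/eqP; rewrite subr_eq0 -!(circB Hl); apply/eqP; congr (circ y _); exact: RS a x z. }
have F4 : ((circ y (circ a (circ x z))) - (circ y (circ x (circ a z)))) = 0.
{ by rewrite (LC a x z) subrr. }
have F5 : ((circ y (circ a (circ z x))) - (circ y (circ z (circ a x)))) = 0.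
{ by rewrite (LC a z x) subrr. }
have F6 : (((circ z (circ a (circ x y))) - (circ z (circ (circ a x) y))) - ((circ z (circ a (circ y x))) - (circ z (circ (circ a y) x)))) = 0.
{ apply/eqP; rewrite subr_eq0 -!(circB Hl); apply/eqP; congr (circ z _); exact: RS a x y. }
have F7 : ((circ z (circ a (circ x y))) - (circ z (circ x (circ a y)))) = 0.
{ by rewrite (LC a x y) subrr. }
have F8 : ((circ z (circ a (circ y x))) - (circ z (circ y (circ a x)))) = 0.
{ by rewrite (LC a y x) subrr. }
have F9 : (((circ (circ a x) (circ y z)) - (circ (circ (circ a x) y) z)) - ((circ (circ a x) (circ z y)) - (circ (circ (circ a x) z) y))) = 0.
{ by rewrite (RS (circ a x) y z) subrr. }
have F10 : ((circ (circ a x) (circ y z)) - (circ y (circ (circ a x) z))) = 0.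
{ by rewrite (LC (circ a x) y z) subrr. }
have F11 : ((circ y (circ z (circ a x))) - (circ z (circ y (circ a x)))) = 0.
{ by rewrite (LC y z (circ a x)) subrr. }
have F12 : ((circ (circ a x) (circ z y)) - (circ z (circ (circ a x) y))) = 0.
{ by rewrite (LC (circ a x) z y) subrr. }
have F13 : (((circ (circ a y) (circ x z)) - (circ (circ (circ a y) x) z)) - ((circ (circ a y) (circ z x)) - (circ (circ (circ a y) z) x))) = 0.
{ by rewrite (RS (circ a y) x z) subrr. }
have F14 : ((circ (circ a y) (circ x z)) - (circ x (circ (circ a y) z))) = 0.
{ by rewrite (LC (circ a y) x z) subrr. }
have F15 : ((circ x (circ z (circ a y))) - (circ z (circ x (circ a y)))) = 0.
{ by rewrite (LC x z (circ a y)) subrr. }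
have F16 : ((circ (circ a y) (circ z x)) - (circ z (circ (circ a y) x))) = 0.
{ by rewrite (LC (circ a y) z x) subrr. }
have F17 : (((circ (circ a z) (circ x y)) - (circ (circ (circ a z) x) y)) - ((circ (circ a z) (circ y x)) - (circ (circ (circ a z) y) x))) = 0.
{ by rewrite (RS (circ a z) x y) subrr. }
have F18 : ((circ (circ a z) (circ x y)) - (circ x (circ (circ a z) y))) = 0.
{ by rewrite (LC (circ a z) x y) subrr. }
have F19 : ((circ x (circ y (circ a z))) - (circ y (circ x (circ a z)))) = 0.
{ by rewrite (LC x y (circ a z)) subrr. }
have F20 : ((circ (circ a z) (circ y x)) - (circ y (circ (circ a z) x))) = 0.
{ by rewrite (LC (circ a z) y x) subrr. }
have key : (((((((circ (circ (circ a x) y) z) + (circ (circ (circ a y) z) x)) + (circ (circ (circ a z) x) y)) - (circ (circ (circ a y) x) z)) - (circ (circ (circ a z) y) x)) - (circ (circ (circ a x) z) y)) - (((((((((((((((((((((((circ x (circ a (circ y z))) - (circ x (circ (circ a y) z))) - ((circ x (circ a (circ z y))) - (circ x (circ (circ a z) y)))) - ((circ x (circ a (circ y z))) - (circ x (circ y (circ a z))))) + ((circ x (circ a (circ z y))) - (circ x (circ z (circ a y))))) - (((circ y (circ a (circ x z))) - (circ y (circ (circ a x) z))) - ((circ y (circ a (circ z x))) - (circ y (circ (circ a z) x))))) + ((circ y (circ a (circ x z))) - (circ y (circ x (circ a z))))) - ((circ y (circ a (circ z x))) - (circ y (circ z (circ a x))))) + (((circ z (circ a (circ x y))) - (circ z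 (circ (circ a x) y))) - ((circ z (circ a (circ y x))) - (circ z (circ (circ a y) x))))) - ((circ z (circ a (circ x y))) - (circ z (circ x (circ a y))))) + ((circ z (circ a (circ y x))) - (circ z (circ y (circ a x))))) - (((circ (circ a x) (circ y z)) - (circ (circ (circ a x) y) z)) - ((circ (circ a x) (circ z y)) - (circ (circ (circ a x) z) y)))) + ((circ (circ a x) (circ y z)) - (circ y (circ (circ a x) z)))) - ((circ y (circ z (circ a x))) - (circ z (circ y (circ a x))))) - ((circ (circ a x) (circ z y)) - (circ z (circ (circ a x) y)))) + (((circ (circ a y) (circ x z)) - (circ (circ (circ a y) x) z)) - ((circ (circ a y) (circ z x)) - (circ (circ (circ a y) z) x)))) - ((circ (circ a y) (circ x z)) - (circ x (circ (circ a y) z)))) + ((circ x (circ z (circ a y))) - (circ z (circ x (circ a y))))) + ((circ (circ a y) (circ z x)) - (circ z (circ (circ a y) x)))) - (((circ (circ a z) (circ x y)) - (circ (circ (circ a z) x) y)) - ((circ (circ a z) (circ y x)) - (circ (circ (circ a z) y) x)))) + ((circ (circ a z) (circ x y)) - (circ x (circ (circ a z) y)))) - ((circ x (circ y (circ a z))) - (circ y (circ x (circ a z))))) - ((circ (circ a z) (circ y x)) - (circ y (circ (circ a z) x))))) = 0 := @check A [:: (circ x (circ a (circ y z))); (circ x (circ (circ a y) z)); (circ x (circ a (circ z y))); (circ x (circ (circ a z) y)); (circ x (circ y (circ a z))); (circ x (circ z (circ a y))); (circ y (circ a (circ x z))); (circ y (circ (circ a x) z)); (circ y (circ a (circ z x)));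 (circ y (circ (circ a z) x)); (circ y (circ x (circ a z))); (circ y (circ z (circ a x))); (circ z (circ a (circ x y))); (circ z (circ (circ a x) y)); (circ z (circ a (circ y x))); (circ z (circ (circ a y) x)); (circ z (circ x (circ a y))); (circ z (circ y (circ a x))); (circ (circ a x) (circ y z)); (circ (circ (circ a x) y) z); (circ (circ a x) (circ z y)); (circ (circ (circ a x) z) y); (circ (circ a y) (circ x z)); (circ (circ (circ a y) x) z); (circ (circ a y) (circ z x)); (circ (circ (circ a y) z) x); (circ (circ a z) (circ x y)); (circ (circ (circ a z) x) y); (circ (circ a z) (circ y x)); (circ (circ (circ a z) y) x)] (LAdd (LAdd (LAdd (LAdd (LAdd (LAdd (LAtom 19) (LAtom 25)) (LAtom 27)) (LOpp (LAtom 23))) (LOpp (LAtom 29))) (LOpp (LAtom 21))) (LOpp (LAdd (LAdd (LAdd (LAdd (LAdd (LAdd (LAdd (LAdd (LAdd (LAdd (LAdd (LAdd (LAdd (LAdd (LAdd (LAdd (LAdd (LAdd (LAdd (LAdd (LAdd (LAdd (LAtom 0) (LOpp (LAtom 1))) (LOpp (LAdd (LAtom 2) (LOpp (LAtom 3))))) (LOpp (LAdd (LAtom 0) (LOpp (LAtom 4))))) (LAdd (LAtom 2) (LOpp (LAtom 5)))) (LOpp (LAdd (LAdd (LAtom 6) (LOpp (LAtom 7))) (LOpp (LAdd (LAtom 8) (LOpp (LAtom 9))))))) (LAdd (LAtom 6) (LOpp (LAtom 10)))) (LOpp (LAdd (LAtom 8) (LOpp (LAtom 11))))) (LAdd (LAdd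 (LAtom 12) (LOpp (LAtom 13))) (LOpp (LAdd (LAtom 14) (LOpp (LAtom 15)))))) (LOpp (LAdd (LAtom 12) (LOpp (LAtom 16))))) (LAdd (LAtom 14) (LOpp (LAtom 17)))) (LOpp (LAdd (LAdd (LAtom 18) (LOpp (LAtom 19))) (LOpp (LAdd (LAtom 20) (LOpp (LAtom 21))))))) (LAdd (LAtom 18) (LOpp (LAtom 7)))) (LOpp (LAdd (LAtom 11) (LOpp (LAtom 17))))) (LOpp (LAdd (LAtom 20) (LOpp (LAtom 13))))) (LAdd (LAdd (LAtom 22) (LOpp (LAtom 23))) (LOpp (LAdd (LAtom 24) (LOpp (LAtom 25)))))) (LOpp (LAdd (LAtom 22) (LOpp (LAtom 1))))) (LAdd (LAtom 5) (LOpp (LAtom 16)))) (LAdd (LAtom 24) (LOpp (LAtom 15)))) (LOpp (LAdd (LAdd (LAtom 26) (LOpp (LAtom 27))) (LOpp (LAdd (LAtom 28) (LOpp (LAtom 29))))))) (LAdd (LAtom 26) (LOpp (LAtom 3)))) (LOpp (LAdd (LAtom 4) (LOpp (LAtom 10))))) (LOpp (LAdd (LAtom 28) (LOpp (LAtom 9))))))) erefl.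
rewrite F0 F1 F2 F3 F4 F5 F6 F7 F8 F9 F10 F11 F12 F13 F14 F15 F16 F17 F18 F19 F20 in key.
by move: key; rewrite ?(addr0, subr0, oppr0, add0r).
Qed.
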